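(* Let $k\geq2$ and let $W\subseteq\mathbb{Z}_{3k}$ be such that for every $i\in\mathbb{Z}_{3k}$, $|x^i\cap W|\geq1$ and $|C^i\cap\overline W|\geq2$, where $\overline W=\mathbb{Z}_{3k}\setminus W$. Let $i\in\overline W$ be such that $\overline W\cap[i+2k,i+2k+\omega(i)]_{3k}\neq\emptyset$. Then there exists a cover $\tilde x$ of $C^k_{3k}$ with $|\tilde x|=4$ and $\tilde x\cap W=\emptyset$.
   Context: $\mathbb{Z}_{3k}=\{0,\dots,3k-1\}$ with addition modulo $3k$; $[a,b]_{3k}$ is the cyclic closed interval from $a$ to $b$. $C^i=\{i,\dots,i+k-1\}$ (mod $3k$), $C^k_{3k}$ is the $3k\times3k$ $0,1$ matrix whose $i$-th row is the incidence vector of $C^i$, and a cover is a subset $x\subseteq\mathbb{Z}_{3k}$ meeting every $C^i$. $x^i=\{i,i+k,i+2k\}$. For $i\in\overline W$, $\omega(i)=\min\{t\geq0: i+k+t\in\overline W\}$ (well defined since $|C^{i+k}\cap\overline W|\ge2$). *)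

(* Defs.v *)
From mathcomp Require Import all_boot.
Set Implicit Arguments. Unset Strict Implicit. Unset Printing Implicit Defensive.

(* Z_{3k} is modelled as 'I_(3*k); a natural number m denotes the residue m mod 3k. *)
Definition zmem (k : nat) (A : {set 'I_(3*k)}) (m : nat) : bool :=
  m %% (3*k) \in [seq val j | j in A].

Definition Cset (k i : nat) : {set 'I_(3*k)} :=
  [set j : 'I_(3*k) | [exists t : 'I_k, val j == (i + t) %% (3*k)]].

Definition xset (k i : nat) : {set 'I_(3*k)} :=
  [set j : 'I_(3*k) | [exists t : 'I_3, val j == (i + t * k) %% (3*k)]].

Definition is_cover (k : nat) (x : {set 'I_(3*k)}) : Prop :=
  forall i : 'I_(3*k), x :&: Cset k i != set0.

Definition is_omega (k : nat) (Wbar : {set 'I_(3*k)}) (i t : nat) : Prop :=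
  zmem Wbar (i + k + t) /\ forall s, s < t -> ~~ zmem Wbar (i + k + s).

(* Main.v *)
Require Import Defs.
From mathcomp Require Import all_boot zify.

Definition pt {k} (hk : 0 < 3*k) (i m : nat) : 'I_(3*k) := Ordinal (ltn_pmod (i+m) hk).

Lemma zmem_pt k (hk : 0 < 3*k) (A : {set 'I_(3*k)}) i m : zmem A (i + m) = (pt hk i m \in A).
Proof.
rewrite /zmem. have -> : (i + m) %% (3*k) = val (pt hk i m) by [].
by rewrite (mem_map val_inj) mem_enum.
Qed.

Lemma pt_eq k (hk : 0 < 3*k) i o1 o2 : o1 < 3*k -> o2 < 3*k -> (pt hk i o1 == pt hk i o2) = (o1 == o2).
Proof.
move=> h1 h2; apply/eqP/eqP => [e|->//]; move: (congr1 val e) => /= /eqP.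
by rewrite eqn_modDl !modn_small // => /eqP.
Qed.

Lemma pt0 k (hk : 0 < 3*k) (i : 'I_(3*k)) : pt hk i 0 = i.
Proof. apply: val_inj => /=; by rewrite addn0 modn_small. Qed.

Lemma Cset_pt k (hk : 0 < 3*k) i m x : x \in Cset k (pt hk i m) -> exists2 u, u < k & x = pt hk i (m + u).
Proof.
rewrite inE => /existsP [t /eqP e]; exists t => //; apply: val_inj.
by rewrite e /= modnDml addnA.
Qed.

Lemma pt_in_Cset k (hk : 0 < 3*k) i (j : 'I_(3*k)) r o u : u < k -> val j = (i + r) %% (3*k) ->
  (i + o) %% (3*k) = (i + r + u) %% (3*k) -> pt hk i o \in Cset k j.
Proof.
move=> hu ej e; rewrite inE; apply/existsP; exists (Ordinal hu); apply/eqP.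
by rewrite /= e ej modnDml.
Qed.

Lemma offset k (i j : 'I_(3*k)) : exists2 r, r < 3*k & val j = (i + r) %% (3*k).
Proof.
have hi := ltn_ord i; have hj := ltn_ord j.
case: (leqP i j) => h.
  exists (j - i); first lia. rewrite /= modn_small; lia.
exists (j + 3*k - i); first lia.
have -> : i + (j + 3 * k - i) = j + 3*k by lia.
by rewrite modnDr modn_small /=; lia.
Qed.

Theorem mainTheorem8 (k : nat) (W : {set 'I_(3*k)}) (i : 'I_(3*k)) :
  2 <= k ->
  (forall j : 'I_(3*k), 1 <= #|xset k j :&: W|) ->
  (forall j : 'I_(3*k), 2 <= #|Cset k j :&: ~: W|) ->
  i \in ~: W ->
  (exists t, is_omega (~: W) i t /\
     exists s, s <= t /\ zmem (~: W) (i + 2 * k + s)) ->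
  exists xt : {set 'I_(3*k)}, is_cover xt /\ #|xt| = 4 /\ xt :&: W = set0.
Proof.
move=> k2 _ hC hi [t [[ht htmin] [s [hst hs]]]].
have hk : 0 < 3*k by lia.
rewrite -addnA zmem_pt in ht. rewrite -addnA zmem_pt in hs.
have htmin' : forall u, u < t -> pt hk i (k + u) \notin ~: W.
  by move=> u hu; rewrite -zmem_pt addnA; apply: htmin.
have tk : t < k.
  have := hC (pt hk i k); move=> /(leq_trans (isT : 0 < 2)) /card_gt0P [x].
  rewrite inE => /andP [/Cset_pt [u hu ->] hx].
  rewrite ltnNge; apply/negP => kt.
  by move: (htmin' u (leq_trans hu kt)); rewrite hx.
have [od [od0 odt odk hod]] : exists od, [/\ 0 < od, t <= od, od < k & pt hk i od \in ~: W].
  have := hC (pt hk i t); rewrite (cardsD1 (pt hk i 0)).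
  move=> h; have : 0 < #|(Cset k (pt hk i t) :&: ~: W) :\ pt hk i 0|.
    case: (pt hk i 0 \in Cset k (pt hk i t) :&: ~: W) h => /= h; [by rewrite add1n ltnS in h | by apply: ltnW].
  move=> /card_gt0P [x]; rewrite in_setD1 in_setI => /andP [hx0 /andP [/Cset_pt [u hu ex] hx]].
  subst x; exists (t + u); split.
  - by move: hx0; case: (t + u) => //; rewrite eqxx.
  - lia.
  - rewrite ltnNge; apply/negP => kt.
    have e : t + u = k + (t + u - k) by lia.
    move: hx; rewrite e => hx.
    by move: (htmin' (t + u - k) ltac:(lia)); rewrite hx.
  - done.
exists [set pt hk i 0; pt hk i od; pt hk i (k + t); pt hk i (2*k + s)].
split; last split.
- move=> j; apply/set0Pn.
  have [r hr ej] := offset _ i j.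
  case: (posnP r) => [r0|rpos].
    exists (pt hk i 0); apply/setIP; split; first by rewrite !inE eqxx ?orbT.
    apply: (@pt_in_Cset _ hk i j r _ (0) _ ej); try lia; by rewrite ?r0 ?addn0.
  case: (leqP r od) => h1.
    exists (pt hk i od); apply/setIP; split; first by rewrite !inE eqxx ?orbT.
    apply: (@pt_in_Cset _ hk i j r _ (od - r) _ ej); first lia. congr (_ %% _); lia.
  case: (leqP r (k + t)) => h2.
    exists (pt hk i (k+t)); apply/setIP; split; first by rewrite !inE eqxx ?orbT.
    apply: (@pt_in_Cset _ hk i j r _ (k + t - r) _ ej); first lia. congr (_ %% _); lia.
  case: (leqP r (2*k + s)) => h3.
    exists (pt hk i (2*k+s)); apply/setIP; split; first by rewrite !inE eqxx ?orbT.
    apply: (@pt_in_Cset _ hk i j r _ (2*k + s - r) _ ej); first lia. congr (_ %% _); lia.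
  exists (pt hk i 0); apply/setIP; split; first by rewrite !inE eqxx ?orbT.
  apply: (@pt_in_Cset _ hk i j r _ (3*k - r) _ ej); first lia.
  have -> : i + r + (3 * k - r) = i + 0 + 3*k by lia.
  by rewrite modnDr.
- rewrite -!setUA !cardsU1 cards1 !inE !pt_eq; try lia.
- apply/setP => x; rewrite !inE; apply/negP => /andP [hx hW].
  move: hx; rewrite -!orbA => /or4P [] /eqP ?; subst x.
  + by move: hi; rewrite -(pt0 _ hk i) inE hW.
  + by move: hod; rewrite inE hW.
  + by move: ht; rewrite inE hW.
  + by move: hs; rewrite inE hW.
Qed.
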